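(* Let $P_1\in\mathbf{A}^{k_1\times k_2}$. (i) If the left $\mathbf{A}$-module ${}_{\mathbf{A}}E'$ is injective, then $\operatorname{im}_{E'}(P_1\bullet)$ is closed in $(E')^{k_1}$, and $\bullet P_1:E^{1\times k_1}\to E^{1\times k_2}$ is a strict morphism. (ii) If the left $\mathbf{A}$-module $\operatorname{coker}_{\mathbf{A}}(\bullet P_1)=\mathbf{A}^{1\times k_2}/(\mathbf{A}^{1\times k_1}P_1)$ is torsion-free and the right $\mathbf{A}$-module $E_{\mathbf{A}}$ is flat, then $\operatorname{im}_E(\bullet P_1)$ is closed in $E^{1\times k_2}$, and $P_1\bullet:(E')^{k_2}\to(E')^{k_1}$ is a strict morphism.
   Context: Let $\mathbf{k}=\mathbb{R}$ or $\mathbb{C}$ and let $\mathbf{A}$ be a (not necessarily commutative) Noetherian domain which is a $\mathbf{k}$-algebra. Let $E,E'$ be $\mathbf{k}$-vector spaces with a nondegenerate bilinear form $\langle -,-\rangle:E\times E'\to\mathbf{k}$; $E$ and $E'$ carry the weak topologies $\sigma(E,E')$ and $\sigma(E',E)$. Assume $E'$ is a left $\mathbf{A}$-module which is semitopological, i.e. each map $x'\mapsto a\,x'$ ($a\in\mathbf{A}$) is continuous. Then $E$ is a right $\mathbf{A}$-module via $\langle x\,a,x'\rangle=\langle x,a\,x'\rangle$. The bracket extends to $E^{1\times k}\times (E')^{k}$, making $(E^{1\times k},(E')^k)$ a dual pair (with weak topologies). For $P\in\mathbf{A}^{q\times k}$, $P\bullet:(E')^k\to(E')^q$, $x'\mapsto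 P\,x'$, and its transpose $\bullet P:E^{1\times q}\to E^{1\times k}$, $x\mapsto x\,P$; likewise $\bullet P:\mathbf{A}^{1\times q}\to\mathbf{A}^{1\times k}$. A continuous linear map $f:X\to Y$ between topological vector spaces is a strict morphism if the induced bijection $X/\ker f\to\operatorname{im}f$ is a topological isomorphism, where $\operatorname{im} f$ carries the subspace topology. *)

(* Defs.v *)
From HB Require Import structures.
From mathcomp Require Import all_boot all_order all_algebra.
Set Implicit Arguments. Unset Strict Implicit. Unset Printing Implicit Defensive.
Import Order.TTheory GRing.Theory Num.Theory.
Local Open Scope ring_scope.

Section WeakTopology.
Variable K : numFieldType.

(* Open sets of the weak topology sigma(Y, X) on Y induced by a pairing
   b : X -> Y -> K (basic neighbourhoods: finitely many seminorms |b x .|). *)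
Definition wopen (X Y : Type) (b : X -> Y -> K) (U : Y -> Prop) : Prop :=
  forall y, U y -> exists (n : nat) (xs : 'I_n -> X) (e : K), 0 < e /\
    forall z, (forall i, `|b (xs i) z - b (xs i) y| < e) -> U z.

Definition wclosed (X Y : Type) (b : X -> Y -> K) (F : Y -> Prop) : Prop :=
  wopen b (fun y => ~ F y).

(* the transposed pairing, giving sigma(X, Y) on X *)
Definition tpair (X Y : Type) (b : X -> Y -> K) : Y -> X -> K := fun y x => b x y.

Definition wcontinuous (X1 Y1 X2 Y2 : Type) (b1 : X1 -> Y1 -> K)
  (b2 : X2 -> Y2 -> K) (f : Y1 -> Y2) : Prop :=
  forall V, wopen b2 V -> wopen b1 (fun y => V (f y)).

(* strict morphism: f continuous and the induced bijection Y1/ker f -> im f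
   is a homeomorphism (quotient topology on Y1/ker f, whose open sets are the
   images of the ker f-saturated open sets of Y1; subspace topology on im f). *)
Definition strict_morphism (X1 Y1 X2 Y2 : Type) (b1 : X1 -> Y1 -> K)
  (b2 : X2 -> Y2 -> K) (f : Y1 -> Y2) : Prop :=
  wcontinuous b1 b2 f /\
  forall U, wopen b1 U -> (forall y z, U y -> f z = f y -> U z) ->
    exists V, wopen b2 V /\
      forall w, (exists y, U y /\ f y = w) <-> (V w /\ exists y, f y = w).

(* bracket extended to E^{1 x k} x (E')^k *)
Definition pairv (X Y : Type) (b : X -> Y -> K) (k : nat)
  (x : 'I_k -> X) (y : 'I_k -> Y) : K := \sum_(i < k) b (x i) (y i).

End WeakTopology.

Section Algebra.
Variable K : numFieldType.
Variable A : algType K.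

Definition is_domain : Prop := forall a b : A, a * b = 0 -> a = 0 \/ b = 0.

Definition left_ideal (I : A -> Prop) : Prop :=
  [/\ I 0, forall x y, I x -> I y -> I (x + y) & forall a x, I x -> I (a * x)].
Definition right_ideal (I : A -> Prop) : Prop :=
  [/\ I 0, forall x y, I x -> I y -> I (x + y) & forall a x, I x -> I (x * a)].

(* Noetherian = left and right Noetherian: every one-sided ideal is
   finitely generated *)
Definition noetherian : Prop :=
  (forall I, left_ideal I -> exists n (g : 'I_n -> A),
      forall x, I x <-> exists c : 'I_n -> A, x = \sum_(i < n) c i * g i) /\
  (forall I, right_ideal I -> exists n (g : 'I_n -> A),
      forall x, I x <-> exists c : 'I_n -> A, x = \sum_(i < n) g i * c i).

Definition lmulv (E' : lmodType A) (k1 k2 : nat) (P : 'M[A]_(k1, k2))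
  (y : 'I_k2 -> E') : 'I_k1 -> E' := fun i => \sum_(j < k2) P i j *: y j.

Definition rmulv (E : zmodType) (ract : E -> A -> E) (k1 k2 : nat)
  (P : 'M[A]_(k1, k2)) (x : 'I_k1 -> E) : 'I_k2 -> E :=
  fun j => \sum_(i < k1) ract (x i) (P i j).

Definition injective_module (E' : lmodType A) : Prop :=
  forall (M N : lmodType A) (i : {linear M -> N}) (f : {linear M -> E'}),
    injective i -> exists g : {linear N -> E'}, forall m, g (i m) = f m.

Definition balanced (E : zmodType) (ract : E -> A -> E) (M : lmodType A)
  (G : zmodType) (beta : E -> M -> G) : Prop :=
  [/\ forall x x' m, beta (x + x') m = beta x m + beta x' m,
      forall x m m', beta x (m + m') = beta x m + beta x m'
    & forall x a m, beta (ract x a) m = beta x (a *: m)].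

(* the element sum_k xs k (x) ms k of E (x)_A M is zero
   (tensor product characterised by its universal property) *)
Definition tensor_zero (E : zmodType) (ract : E -> A -> E) (M : lmodType A)
  (n : nat) (xs : 'I_n -> E) (ms : 'I_n -> M) : Prop :=
  forall (G : zmodType) (beta : E -> M -> G), balanced ract beta ->
    \sum_(k < n) beta (xs k) (ms k) = 0.

(* flat right A-module: E (x)_A - preserves injections *)
Definition flat_module (E : zmodType) (ract : E -> A -> E) : Prop :=
  forall (M N : lmodType A) (i : {linear M -> N}), injective i ->
    forall n (xs : 'I_n -> E) (ms : 'I_n -> M),
      tensor_zero ract xs (fun k => i (ms k)) -> tensor_zero ract xs ms.

(* coker(.P) = A^{1 x k2} / A^{1 x k1} P is torsion-free as a left A-module *)
Definition coker_torsion_free (k1 k2 : nat) (P : 'M[A]_(k1, k2)) : Prop :=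
  forall (a : A) (u : 'rV[A]_k2), a != 0 ->
    (exists v : 'rV[A]_k1, a *: u = v *m P) -> exists w : 'rV[A]_k1, u = w *m P.

End Algebra.

(* Main.v *)
Require Import Defs.
From HB Require Import structures.
From mathcomp Require Import all_boot all_order all_algebra.
From mathcomp Require Import ring.
From mathcomp Require Import boolp.
Set Implicit Arguments. Unset Strict Implicit. Unset Printing Implicit Defensive.
Import Order.TTheory GRing.Theory Num.Theory.
Local Open Scope ring_scope.


Lemma minpos (K : numFieldType) (a b : K) : 0 < a -> 0 < b ->
  [/\ 0 < a * b / (a + b), a * b / (a + b) <= a & a * b / (a + b) <= b].
Proof.
move=> ha hb; have hab : 0 < a + b by rewrite addr_gt0.
split; first by rewrite divr_gt0 ?mulr_gt0.
  by rewrite ler_pdivrMr // ler_pM2l // lerDr ltW.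
by rewrite ler_pdivrMr // mulrC ler_pM2l // lerDl ltW.
Qed.

Section Generic.
Variables (K : numFieldType) (C1 D1 C2 D2 : Type) (b1 : C1 -> D1 -> K)
  (b2 : C2 -> D2 -> K) (f : D1 -> D2) (g : C2 -> C1).
Hypothesis adj : forall y z, b2 y (f z) = b1 (g y) z.
Variable mv : K -> D1 -> D1 -> D1 -> D1.
Hypothesis mvf : forall t z p q, f p = f q -> f (mv t z p q) = f z.
Hypothesis mvb : forall t z p q x, b1 x (mv t z p q) = b1 x z + t * (b1 x p - b1 x q).
Variable cb : K -> C1 -> C1 -> C1.
Hypothesis cbb : forall c x x2 z, b1 (cb c x x2) z = b1 x z - c * b1 x2 z.
Hypothesis char : forall x, (forall p q, f p = f q -> b1 x p = b1 x q) -> exists y, g y = x.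

Lemma core n (xs : 'I_n -> C1) (e : K) : 0 < e ->
  exists m (ys : 'I_m -> C2) e', 0 < e' /\ forall z y,
    (forall j, `|b2 (ys j) (f z) - b2 (ys j) (f y)| < e') ->
    exists z', f z' = f z /\ forall i, `|b1 (xs i) z' - b1 (xs i) y| < e.
Proof.
move=> e0; elim: n xs => [|n IH] xs.
  exists 0%N, (fun j : 'I_0 => False_rect C2 (Bool.diff_false_true (ltn_ord j))), 1.
  split=> // z y _; exists z; split=> // -[? //].
set xn := xs ord_max; pose xr i := xs (lift ord_max i).
case: (pselect (forall p q, f p = f q -> b1 xn p = b1 xn q)) => [hb|ha].
  have [y2 gy2] := char hb.
  have [m [ys [e' [e'0 Hc]]]] := IH xr.
  exists m.+1, (fun j => match unlift ord_max j with Some j' => ys j' | None => y2 end).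
  have [m0 m1 m2] := minpos e'0 e0.
  exists (e' * e / (e' + e)); split=> // z y Hj.
  have [z' [fz' Hz']] : exists z', f z' = f z /\ forall i, `|b1 (xr i) z' - b1 (xr i) y| < e.
    apply: Hc => j; have := Hj (lift ord_max j); rewrite liftK => h; exact: lt_le_trans h m1.
  exists z'; split=> // i; case: (unliftP ord_max i) => [j ->|->]; first exact: Hz'.
  have := Hj ord_max; rewrite unlift_none => h; have {h} := lt_le_trans h m2.
  by rewrite !adj gy2 -/xn (hb z' z fz').
have [p [q [fpq dpq]]] : exists p q, f p = f q /\ b1 xn p != b1 xn q.
  apply: contra_notP ha => H p q fpq; apply/eqP; apply: contra_notT H => H.
  by exists p, q.
set d := b1 xn p - b1 xn q.
have d0 : d != 0 by rewrite subr_eq0.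
pose xs' i := cb ((b1 (xr i) p - b1 (xr i) q) / d) (xr i) xn.
have [m [ys [e' [e'0 Hc]]]] := IH xs'.
exists m, ys, e'; split=> // z y Hj.
have [z' [fz' Hz']] := Hc z y Hj.
pose t := - (b1 xn z' - b1 xn y) / d.
exists (mv t z' p q); split; first by rewrite mvf.
move=> i; case: (unliftP ord_max i) => [j ->|->].
  have := Hz' j; rewrite /xs' !cbb mvb.
  suff -> : b1 (xr j) z' + t * (b1 (xr j) p - b1 (xr j) q) - b1 (xr j) y =
     b1 (xr j) z' - (b1 (xr j) p - b1 (xr j) q) / d * b1 xn z' -
     (b1 (xr j) y - (b1 (xr j) p - b1 (xr j) q) / d * b1 xn y) by [].
  rewrite /t; field; exact: d0.
rewrite mvb -/xn.
suff -> : b1 xn z' + t * (b1 xn p - b1 xn q) - b1 xn y = 0 by rewrite normr0.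
rewrite -/d /t; field; exact: d0.
Qed.

Lemma gen_cont : wcontinuous b1 b2 f.
Proof.
move=> V oV y Vy; have [n [xs [e [e0 H]]]] := oV _ Vy.
exists n, (fun i => g (xs i)), e; split=> // z Hz; apply: H => i.
by rewrite !adj.
Qed.

Lemma gen_closed : wclosed (tpair b1) (fun x => exists y, g y = x).
Proof.
move=> x nx.
have [p [q [fpq dpq]]] : exists p q, f p = f q /\ b1 x p != b1 x q.
  apply: contra_notP nx => H; apply: char => p q fpq; apply/eqP.
  apply: contra_notT H => H; by exists p, q.
set d := b1 x p - b1 x q.
have d0 : 0 < `|d| by rewrite normr_gt0 subr_eq0.
exists 2%N, (fun i : 'I_2 => if i == ord0 then p else q), (`|d| / 2).
split; first by rewrite divr_gt0.
move=> z Hz [y gy]; have := Hz ord0; have := Hz (lift ord0 ord0); rewrite /tpair /=.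
move=> h2 h1.
have e1 : b1 z p = b1 z q by rewrite -gy -!adj fpq.
have : `|d| <= `|b1 z p - b1 x p| + `|b1 z q - b1 x q|.
  rewrite -[X in _ <= X + _]normrN; apply: le_trans (ler_normD _ _).
  rewrite le_eqVlt; apply/orP; left; apply/eqP; congr `|_|; rewrite /d e1; ring.
move=> h; have := le_lt_trans h (ltrD h1 h2).
by rewrite -splitr ltxx.
Qed.
Lemma gen_strict : strict_morphism b1 b2 f.
Proof.
split; first exact: gen_cont.
move=> U oU satU.
pose V w := exists n (xs : 'I_n -> C2) e, 0 < e /\ forall w',
  (forall i, `|b2 (xs i) w' - b2 (xs i) w| < e) -> (exists y, f y = w') ->
  exists y, U y /\ f y = w'.
exists V; split.
  move=> w [n [xs [e [e0 H]]]]; exists n, xs, (e / 2); split; first by rewrite divr_gt0.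
  move=> z Hz; exists n, xs, (e / 2); split; first by rewrite divr_gt0.
  move=> w' Hw'; apply: H => i.
  have -> : b2 (xs i) w' - b2 (xs i) w =
    (b2 (xs i) w' - b2 (xs i) z) + (b2 (xs i) z - b2 (xs i) w) by ring.
  by rewrite (splitr e); apply: le_lt_trans (ler_normD _ _) (ltrD (Hw' i) (Hz i)).
move=> w; split.
  move=> [y [Uy fy]]; split; last by exists y.
  have [n [xs [e [e0 HU]]]] := oU _ Uy.
  have [m [ys [e' [e'0 Hc]]]] := core xs e0.
  exists m, ys, e'; split=> // w' Hw' [z fz].
  have [z' [fz' Hz']] : exists z', f z' = f z /\ forall i, `|b1 (xs i) z' - b1 (xs i) y| < e.
    by apply: Hc => j; rewrite fz fy.
  exists z'; split; [exact: HU | by rewrite fz'].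
move=> [[n [xs [e [e0 H]]]] Hw]; apply: H Hw => i.
by rewrite subrr normr0.
Qed.
End Generic.


Section ImSub.
Variables (R : nzRingType) (m n : nat) (P : 'M[R]_(m, n)).
Definition imP_pred : pred 'rV[R]_n := fun u => `[< exists v : 'rV[R]_m, u = v *m P >].
Lemma imP_closed : submod_closed imP_pred.
Proof.
split.
  by apply/asboolP; exists 0; rewrite mul0mx.
move=> a u w /asboolP[v ->] /asboolP[v' ->]; apply/asboolP.
by exists (a *: v + v'); rewrite mulmxDl scalemxAl.
Qed.
HB.instance Definition _ := GRing.isSubmodClosed.Build R 'rV[R]_n imP_pred imP_closed.
Record imSub := ImSub { imval :> 'rV[R]_n; _ : imP_pred imval }.
HB.instance Definition _ := [isSub for imval].
HB.instance Definition _ := [Choice of imSub by <:].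
HB.instance Definition _ := [SubChoice_isSubLmodule of imSub by <:].
Lemma imval_is_linear : linear imval.
Proof. by []. Qed.
HB.instance Definition _ := GRing.isLinear.Build R imSub 'rV[R]_n _ imval imval_is_linear.
Lemma imval_inj : injective imval.
Proof. exact: val_inj. Qed.
Lemma imvalP (u : imSub) : exists v, imval u = v *m P.
Proof. by case: u => u /= /asboolP. Qed.
Definition mkIm (v : 'rV[R]_m) : imSub := @ImSub (v *m P) (introT (asboolP _) (ex_intro _ v erefl)).
End ImSub.



Record zpred (V : zmodType) := ZPred {
  zp :> V -> Prop; zp0 : zp 0; zpB : forall a b, zp a -> zp b -> zp (a - b) }.

Section Quot.
Variables (V : zmodType) (S : zpred V).
Let SB := @zpB V S.
Definition cls (v : V) : V -> Prop := fun w => S (w - v).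
Record quo := Quo { qval : V -> Prop; qvalP : exists v, qval = cls v }.
HB.instance Definition _ := gen_eqMixin quo.
HB.instance Definition _ := gen_choiceMixin quo.
Lemma SN a : S a -> S (- a).
Proof. by move=> h; rewrite -sub0r; apply: SB => //; apply: zp0. Qed.
Lemma SD a b : S a -> S b -> S (a + b).
Proof. by move=> ha hb; rewrite -[b]opprK; apply: SB => //; apply: SN. Qed.
Lemma quo_eq (x y : quo) : qval x = qval y -> x = y.
Proof.
case: x y => qx px [qy py] /= e; move: px py; rewrite e => px py.
by rewrite (Prop_irrelevance px py).
Qed.
Definition qpi (v : V) : quo := @Quo (cls v) (ex_intro _ v erefl).
Lemma qpi_eq v w : qpi v = qpi w <-> S (v - w).
Proof.
split.
  move=> /(congr1 qval) /= e; have : cls w v by rewrite -e /cls subrr; exact: zp0.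
  by [].
move=> h; apply: quo_eq => /=; apply: funext => u; apply: propext; rewrite /cls; split.
  move=> h'; have -> : u - w = (u - v) + (v - w) by rewrite addrA subrK.
  exact: SD.
move=> h'; have -> : u - v = (u - w) - (v - w) by rewrite opprB addrA subrK.
exact: SB.
Qed.
Definition qrep (x : quo) : V := projT1 (cid (qvalP x)).
Lemma qrepK x : qpi (qrep x) = x.
Proof.
apply: quo_eq => /=; rewrite /qrep; case: (cid _) => v /= ->.
by [].
Qed.
Lemma qrep_pi v : S (qrep (qpi v) - v).
Proof. by apply/qpi_eq; rewrite qrepK. Qed.
Lemma quoW (P : quo -> Prop) : (forall v, P (qpi v)) -> forall x, P x.
Proof. by move=> h x; rewrite -(qrepK x). Qed.
Definition qadd x y := qpi (qrep x + qrep y).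
Definition qopp x := qpi (- qrep x).
Definition qzero := qpi 0.
Lemma qaddE v w : qadd (qpi v) (qpi w) = qpi (v + w).
Proof.
apply/qpi_eq; have -> : qrep (qpi v) + qrep (qpi w) - (v + w) =
   (qrep (qpi v) - v) + (qrep (qpi w) - w) by rewrite opprD addrACA.
by apply: SD; apply: qrep_pi.
Qed.
Lemma qoppE v : qopp (qpi v) = qpi (- v).
Proof.
apply/qpi_eq; rewrite -opprD; apply: SN; exact: qrep_pi.
Qed.
Lemma qaddA : associative qadd.
Proof. by elim/quoW => a; elim/quoW => b; elim/quoW => c; rewrite !qaddE addrA. Qed.
Lemma qaddC : commutative qadd.
Proof. by elim/quoW => a; elim/quoW => b; rewrite !qaddE addrC. Qed.
Lemma qadd0 : left_id qzero qadd.
Proof. by elim/quoW => a; rewrite /qzero qaddE add0r. Qed.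
Lemma qaddN : left_inverse qzero qopp qadd.
Proof. by elim/quoW => a; rewrite qoppE qaddE addNr. Qed.
HB.instance Definition _ := GRing.isZmodule.Build quo qaddA qaddC qadd0 qaddN.
Lemma qpiD v w : qpi (v + w) = qpi v + qpi w.
Proof. by rewrite -qaddE. Qed.
Lemma qpi0 : qpi 0 = 0.
Proof. by []. Qed.
Lemma qpi_sum n (F : 'I_n -> V) : qpi (\sum_i F i) = \sum_i qpi (F i).
Proof.
elim/big_rec2: _ => // i y1 y2 _ <-; by rewrite qpiD.
Qed.
Lemma qpi_eq0 v : qpi v = 0 -> S v.
Proof. by move=> h; have /qpi_eq := h; rewrite subr0. Qed.
End Quot.


Section OreSec.
Variable R : nzRingType.
Hypothesis dom : forall a b : R, a * b = 0 -> a = 0 \/ b = 0.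
Hypothesis noeth : forall I : R -> Prop,
  [/\ I 0, forall x y, I x -> I y -> I (x + y) & forall a x, I x -> I (a * x)] ->
  exists n (g : 'I_n -> R), forall x, I x <-> exists c : 'I_n -> R, x = \sum_(i < n) c i * g i.

Lemma dom_neq0 (a b : R) : a != 0 -> b != 0 -> a * b != 0.
Proof.
move=> ha hb; apply/eqP => /dom [] /eqP; by [rewrite (negbTE ha) | rewrite (negbTE hb)].
Qed.

Section Indep.
Variables (a b : R).
Hypothesis H : forall al be : R, al * a = be * b -> al = 0.
Hypothesis a0 : a != 0.
Hypothesis b0 : b != 0.
Lemma indep N (e : nat -> R) : \sum_(n < N) e n * (b * a ^+ n) = 0 -> forall n, (n < N)%N -> e n = 0.
Proof.
elim: N e => [|N IH] e; first by [].
rewrite big_ord_recl /= expr0 mulr1.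
have -> : \sum_(i < N) e (bump 0 i) * (b * a ^+ bump 0 i) =
   (\sum_(i < N) e i.+1 * (b * a ^+ i)) * a.
  by rewrite mulr_suml; apply: eq_bigr => i _; rewrite exprSr !mulrA.
set X := \sum_(i < N) _ => h.
have hX : (- X) * a = e 0%N * b by rewrite mulNr; apply/eqP; rewrite eq_sym -subr_eq0 opprK h.
have X0 : X = 0 by have := H hX => /eqP; rewrite oppr_eq0 => /eqP.
have e0 : e 0%N = 0.
  move: hX; rewrite X0 oppr0 mul0r => /esym /dom [] // /eqP; by rewrite (negbTE b0).
case=> [|n] //; rewrite ltnS => hn; exact: (IH (fun n => e n.+1) X0 n hn).
Qed.
End Indep.

Lemma sum_widen N1 N (c : nat -> R) (F : nat -> R) : (N1 <= N)%N ->
  \sum_(n < N1) c n * F n = \sum_(n < N) (if (n < N1)%N then c n else 0) * F n.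
Proof.
move=> hN; rewrite (big_ord_widen _ (fun n => c n * F n) hN) big_mkcond /=.
by apply: eq_bigr => i _; case: ifP => _ //; rewrite mul0r.
Qed.

Lemma left_ore (a b : R) : b != 0 -> exists al be, al != 0 /\ al * a = be * b.
Proof.
move=> b0; have [->|a0] := eqVneq a 0.
  by exists 1, 0; rewrite oner_neq0 mulr0 mul0r.
case: (pselect (exists al be : R, al != 0 /\ al * a = be * b)) => // Hn; exfalso.
have H : forall al be : R, al * a = be * b -> al = 0.
  move=> al be e; apply/eqP; apply: contra_notT Hn => nz; by exists al, be.
pose I x := exists N (c : nat -> R), x = \sum_(n < N) c n * (b * a ^+ n).
have II : [/\ I 0, forall x y, I x -> I y -> I (x + y) & forall a x, I x -> I (a * x)].
  split.
  - by exists 0%N, (fun _ => 0); rewrite big_ord0.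
  - move=> x y [N1 [c1 ->]] [N2 [c2 ->]].
    exists (maxn N1 N2), (fun n => (if (n < N1)%N then c1 n else 0) + (if (n < N2)%N then c2 n else 0)).
    rewrite (sum_widen c1 (fun n => b * a ^+ n) (leq_maxl N1 N2)) (sum_widen c2 (fun n => b * a ^+ n) (leq_maxr N1 N2)) -big_split /=.
    by apply: eq_bigr => i _; rewrite mulrDl.
  - move=> al x [N [c ->]]; exists N, (fun n => al * c n).
    by rewrite mulr_sumr; apply: eq_bigr => i _; rewrite mulrA.
have [n [g Hg]] := noeth II.
have gI : forall i, I (g i).
  move=> i; apply: (proj2 (Hg (g i))); exists (fun j => (j == i)%:R).
  rewrite (bigD1 i) //= eqxx mul1r big1 ?addr0 // => j /negbTE ->; by rewrite mul0r.
have ex : forall i, exists Nc : nat * (nat -> R), g i = \sum_(m < Nc.1) Nc.2 m * (b * a ^+ m).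
  by move=> i; have [N0 [c0 h]] := gI i; exists (N0, c0).
pose Ni i := (projT1 (cid (ex i))).1.
pose ci i := (projT1 (cid (ex i))).2.
have Hci : forall i, g i = \sum_(m < Ni i) ci i m * (b * a ^+ m).
  by move=> i; rewrite /Ni /ci; case: (cid (ex i)).
pose N := (\max_(i < n) Ni i)%N.
have hN : forall i, (Ni i <= N)%N by move=> i; apply: leq_bigmax.
have : I (b * a ^+ N).
  exists N.+1, (fun m => (m == N)%:R); rewrite big_ord_recr /= eqxx mul1r big1 ?add0r // => i _.
  by rewrite ltn_eqF // mul0r.
move=> /(proj1 (Hg _)) [d hd].
pose E m := \sum_(i < n) d i * (if (m < Ni i)%N then ci i m else 0).
have : \sum_(m < N.+1) (E m - ((m : nat) == N)%:R) * (b * a ^+ m) = 0.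
  rewrite big_ord_recr /= eqxx.
  have -> : E N = 0.
    by rewrite /E big1 // => i _; rewrite ltnNge hN /= mulr0.
  rewrite sub0r mulN1r.
  have -> : \sum_(i < N) (E i - ((i : nat) == N)%:R) * (b * a ^+ i) = \sum_(i < N) E i * (b * a ^+ i).
    by apply: eq_bigr => i _; rewrite ltn_eqF // subr0.
  rewrite hd; apply/eqP; rewrite subr_eq0; apply/eqP.
  rewrite /E; under eq_bigr do rewrite mulr_suml.
  rewrite exchange_big /=; apply: eq_bigr => i _.
  rewrite Hci (sum_widen (ci i) (fun n => b * a ^+ n) (hN i)) mulr_sumr; apply: eq_bigr => m _.
  by rewrite -mulrA.
move/(@indep _ _ H b0 N.+1 (fun m => E m - (m == N)%:R))/(_ N (ltnSn N)).
have -> : E N = 0 by rewrite /E big1 // => i _; rewrite ltnNge hN /= mulr0.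
by rewrite eqxx sub0r => /eqP; rewrite oppr_eq0 oner_eq0.
Qed.
End OreSec.


Section DannSec.
Variable R : nzRingType.
Hypothesis dom : forall a b : R, a * b = 0 -> a = 0 \/ b = 0.
Hypothesis lore : forall a b : R, b != 0 -> exists al be, al != 0 /\ al * a = be * b.
Hypothesis rore : forall x p : R, p != 0 -> exists s ga, s != 0 /\ p * ga = x * s.

Lemma dneq0 (a b : R) : a != 0 -> b != 0 -> a * b != 0.
Proof.
move=> ha hb; apply/eqP => /dom [] /eqP; by [rewrite (negbTE ha) | rewrite (negbTE hb)].
Qed.

Lemma dann k1 k2 (T : {set 'I_k2}) (P : 'I_k1 -> 'I_k2 -> R) (u : 'I_k2 -> R) :
  (forall c : 'I_k2 -> R, (forall i, \sum_(j in T) P i j * c j = 0) ->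
     \sum_(j in T) u j * c j = 0) ->
  exists a (v : 'I_k1 -> R), a != 0 /\ forall j, j \in T -> a * u j = \sum_i v i * P i j.
Proof.
have [n hn] : exists n, (#|T| <= n)%N by exists #|T|.
elim: n T P u hn => [|n IH] T P u hn H.
  exists 1, (fun _ => 0); split; first exact: oner_neq0.
  by move=> j; move: hn; rewrite leqn0 => /eqP/cards0_eq ->; rewrite inE.
have [T0|[j0 hj0]] := set_0Vmem T.
  by exists 1, (fun _ => 0); split; [exact: oner_neq0 | move=> j; rewrite T0 inE].
set T' := T :\ j0.
have hn' : (#|T'| <= n)%N by move: hn; rewrite (cardsD1 j0 T) hj0.
have splitT : forall F : 'I_k2 -> R, \sum_(j in T) F j = F j0 + \sum_(j in T') F j.
  by move=> F; rewrite (big_setD1 j0 hj0).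
have inT' : forall j, j \in T' -> j != j0 by move=> j; rewrite !inE => /andP[].
case: (pselect (forall i, P i j0 = 0)) => [Pz|].
  have uj0 : u j0 = 0.
    have := H (fun j => (j == j0)%:R).
    rewrite splitT eqxx mulr1 big1 ?addr0; last by move=> j /inT' /negbTE ->; rewrite mulr0.
    apply=> i; rewrite splitT eqxx mulr1 Pz add0r big1 // => j /inT' /negbTE ->.
    by rewrite mulr0.
  have [a [v [a0 Hv]]] : exists a (v : 'I_k1 -> R), a != 0 /\
      forall j, j \in T' -> a * u j = \sum_i v i * P i j.
    apply: IH => // c Hc.
    have := H c; rewrite splitT uj0 mul0r add0r; apply=> i.
    by rewrite splitT Pz mul0r add0r Hc.
  exists a, v; split=> // j hj; have [->|ne] := eqVneq j j0.
    by rewrite uj0 mulr0 big1 // => i _; rewrite Pz mulr0.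
  by apply: Hv; rewrite !inE ne.
move=> /existsNP [r /eqP pr0]; set p := P r j0.
have /choice [ab Hab] : forall i, exists ab : R * R, ab.1 != 0 /\ ab.1 * P i j0 = ab.2 * p.
  by move=> i; have [al [be [h1 h2]]] := lore (P i j0) pr0; exists (al, be).
pose al i := (ab i).1; pose be i := (ab i).2.
have [alp [bet [alp0 Halp]]] := lore (u j0) pr0.
pose N i j := if i == r then 0 else al i * P i j - be i * P r j.
pose u2 j := alp * u j - bet * P r j.
have [a [v [a0 Hv]]] : exists a (v : 'I_k1 -> R), a != 0 /\
      forall j, j \in T' -> a * u2 j = \sum_i v i * N i j.
  apply: IH => // c Hc.
  pose x := - \sum_(j in T') P r j * c j.
  have [s [ga [s0 Hs]]] := rore x pr0.
  pose c' j := if j == j0 then ga else c j * s.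
  have c'E : forall F : 'I_k2 -> R, \sum_(j in T') F j * c' j = (\sum_(j in T') F j * c j) * s.
    move=> F; rewrite mulr_suml; apply: eq_bigr => j /inT' /negbTE hj.
    by rewrite /c' hj mulrA.
  have := H c'; rewrite splitT /c' eqxx -/c' c'E.
  have Hi : forall i, \sum_(j in T) P i j * c' j = 0.
    move=> i; rewrite splitT /c' eqxx -/c' c'E.
    have [->|nir] := eqVneq i r.
      by rewrite -/p Hs /x mulNr addNr.
    have [hal1 hal2] := Hab i.
    have : al i * (P i j0 * ga + (\sum_(j in T') P i j * c j) * s) = 0.
      rewrite mulrDr mulrA hal2 -mulrA Hs mulrA mulrA -mulrDl.
      have := Hc i; rewrite /N (negbTE nir) => hc.
      suff -> : be i * x + al i * \sum_(j in T') P i j * c j =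
         \sum_(j in T') (al i * P i j - be i * P r j) * c j by rewrite hc mul0r.
      rewrite [RHS](eq_bigr (fun j => al i * P i j * c j - be i * P r j * c j)); last first.
        by move=> j _; rewrite mulrBl.
      rewrite sumrB /x mulrN !mulr_sumr addrC; congr (_ - _).
        by apply: eq_bigr => j _; rewrite mulrA.
      by apply: eq_bigr => j _; rewrite mulrA.
    by move/dom => [/eqP|//]; rewrite (negbTE hal1).
  move/(_ Hi) => hu.
  have : alp * (u j0 * ga + (\sum_(j in T') u j * c j) * s) = 0 by rewrite hu mulr0.
  rewrite mulrDr mulrA Halp -mulrA Hs mulrA mulrA -mulrDl.
  move/dom => [|/eqP]; last by rewrite (negbTE s0).
  move=> e; rewrite -[RHS]e /x mulrN mulr_sumr addrC /u2.
  rewrite (eq_bigr (fun j => alp * u j * c j - bet * P r j * c j)); last first.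
    by move=> j _; rewrite mulrBl.
  rewrite sumrB mulr_sumr; congr (_ - _).
    by apply: eq_bigr => j _; rewrite mulrA.
  by apply: eq_bigr => j _; rewrite mulrA.
pose w i := if i == r then a * bet - \sum_(i' | i' != r) v i' * be i' else v i * al i.
exists (a * alp), w; split; first exact: dneq0.
move=> j hj; rewrite (bigD1 r) //= /w eqxx.
have ws : \sum_(i | i != r) w i * P i j = \sum_(i | i != r) v i * al i * P i j.
  by apply: eq_bigr => i /negbTE hi; rewrite /w hi.
rewrite ws.
have [ej|nej] := eqVneq j j0.
  rewrite ej -/p -mulrA Halp mulrBl mulr_suml mulrA -addrA; apply/eqP.
  rewrite -/p [X in _ + X](_ : _ = 0) ?addr0 //.
  apply/eqP; rewrite addrC subr_eq0; apply/eqP; apply: eq_bigr => i _.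
  by rewrite -!mulrA (proj2 (Hab i)).
have jT' : j \in T' by rewrite !inE nej.
rewrite -mulrA.
have -> : alp * u j = u2 j + bet * P r j by rewrite /u2 subrK.
rewrite mulrDr Hv // (bigD1 r) //= /N eqxx mulr0 add0r.
rewrite (eq_bigr (fun i => v i * al i * P i j - v i * be i * P r j)); last first.
  by move=> i /negbTE nir; rewrite nir mulrBr !mulrA.
rewrite sumrB mulrBl mulr_suml mulrA.
by rewrite addrAC [RHS]addrAC (addrC (\sum_(i | i != r) v i * al i * P i j)).
Qed.
End DannSec.


Section FgSec.
Variable R : nzRingType.
Hypothesis rnoeth : forall I : R -> Prop,
  [/\ I 0, forall x y, I x -> I y -> I (x + y) & forall a x, I x -> I (x * a)] ->
  exists n (g : 'I_n -> R), forall x, I x <-> exists c : 'I_n -> R, x = \sum_(i < n) g i * c i.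

Definition rclosed k (S : ('I_k -> R) -> Prop) :=
  [/\ S (fun _ => 0), (forall u v, S u -> S v -> S (fun j => u j + v j))
    & (forall u a, S u -> S (fun j => u j * a))].

Lemma rclosed_sum k (S : ('I_k -> R) -> Prop) : rclosed S ->
  forall n (F : 'I_n -> 'I_k -> R), (forall i, S (F i)) -> S (fun j => \sum_(i < n) F i j).
Proof.
case=> S0 SD SZ; elim=> [|n IH] F HF.
  by under [fun j => _]funext do rewrite big_ord0.
under [fun j => _]funext do rewrite big_ord_recr /=.
apply: SD; last exact: HF.
exact: (IH (fun i => F (widen_ord (leqnSn n) i))).
Qed.

Lemma rclosedB k (S : ('I_k -> R) -> Prop) : rclosed S ->
  forall u v, S u -> S v -> S (fun j => u j - v j).
Proof.
case=> S0 SD SZ u v hu hv.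
have := SD _ _ hu (SZ _ (-1) hv).
by under [fun j => u j + _]funext do rewrite mulrN1.
Qed.

Lemma fg k (S : ('I_k -> R) -> Prop) : rclosed S ->
  exists n (gens : 'I_n -> 'I_k -> R), (forall l, S (gens l)) /\
    forall c, S c -> exists b : 'I_n -> R, forall j, c j = \sum_(l < n) gens l j * b l.
Proof.
move=> Scl.
suff : forall N (T : {set 'I_k}) (S : ('I_k -> R) -> Prop), (#|T| <= N)%N -> rclosed S ->
  (forall c, S c -> forall j, j \notin T -> c j = 0) ->
  exists n (gens : 'I_n -> 'I_k -> R), (forall l, S (gens l)) /\
    forall c, S c -> exists b : 'I_n -> R, forall j, c j = \sum_(l < n) gens l j * b l.
  by move/(_ #|[set: 'I_k]| setT S (leqnn _) Scl); apply=> c _ j; rewrite inE.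
have base : forall (S : ('I_k -> R) -> Prop), (forall c, S c -> forall j, c j = 0) ->
  exists n (gens : 'I_n -> 'I_k -> R), (forall l, S (gens l)) /\
    forall c, S c -> exists b : 'I_n -> R, forall j, c j = \sum_(l < n) gens l j * b l.
  move=> S' H; exists 0%N, (fun l _ => 0); split=> [[] //|c Sc].
  by exists (fun _ => 0) => j; rewrite big_ord0 (H c Sc).
elim=> [|N IH] T S' hT Scl' Hsupp.
  apply: base => c Sc j; apply: Hsupp => //.
  by move: hT; rewrite leqn0 => /eqP/cards0_eq ->; rewrite inE.
have [T0|[j0 hj0]] := set_0Vmem T.
  by apply: base => c Sc j; apply: Hsupp => //; rewrite T0 inE.
have [S0 SD SZ] := Scl'.
pose I a := exists c, S' c /\ c j0 = a.
have II : [/\ I 0, forall x y, I x -> I y -> I (x + y) & forall a x, I x -> I (x * a)].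
  split.
  - by exists (fun _ => 0).
  - by move=> x y [c [hc <-]] [c' [hc' <-]]; exists (fun j => c j + c' j); split=> //; exact: SD.
  - by move=> a x [c [hc <-]]; exists (fun j => c j * a); split=> //; exact: SZ.
have [n [g Hg]] := rnoeth II.
have /choice [s Hs] : forall i, exists c, S' c /\ c j0 = g i.
  move=> i; apply: (proj2 (Hg (g i))); exists (fun l => (l == i)%:R).
  rewrite (bigD1 i) //= eqxx mulr1 big1 ?addr0 // => l /negbTE ->; by rewrite mulr0.
pose S2 c := S' c /\ c j0 = 0.
have Scl2 : rclosed S2.
  split.
  - by split.
  - by move=> u v [hu u0] [hv v0]; split; [exact: SD | rewrite /= u0 v0 addr0].
  - by move=> u a [hu u0]; split; [exact: SZ | rewrite /= u0 mul0r].
have hT2 : (#|T :\ j0| <= N)%N by move: hT; rewrite (cardsD1 j0 T) hj0.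
have [m [h [Hh1 Hh2]]] : exists m (h : 'I_m -> 'I_k -> R), (forall l, S2 (h l)) /\
    forall c, S2 c -> exists b : 'I_m -> R, forall j, c j = \sum_(l < m) h l j * b l.
  apply: (IH (T :\ j0)) => // c [Sc c0] j; rewrite !inE negb_and negbK.
  by case/orP => [/eqP -> //|]; apply: Hsupp.
exists (n + m)%N, (fun l => match split l with inl i => s i | inr i => h i end).
split.
  by move=> l; case: (split l) => i; [exact: (Hs i).1 | exact: (Hh1 i).1].
move=> c Sc.
have [d hd] : exists d : 'I_n -> R, c j0 = \sum_(i < n) g i * d i.
  by apply: (proj1 (Hg (c j0))); exists c.
pose c' j := c j - \sum_(i < n) s i j * d i.
have Sc' : S2 c'.
  split.
    apply: (rclosedB Scl') => //; apply: (rclosed_sum Scl' (F := fun i j => s i j * d i)).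
    by move=> i; apply: SZ; exact: (Hs i).1.
  rewrite /c' hd; apply/eqP; rewrite subr_eq0; apply/eqP.
  by apply: eq_bigr => i _; rewrite (Hs i).2.
have [b' hb'] := Hh2 _ Sc'.
exists (fun l => match split l with inl i => d i | inr i => b' i end) => j.
rewrite big_split_ord /=.
have -> : c j = \sum_(i < n) s i j * d i + c' j by rewrite /c' addrC subrK.
rewrite hb'; congr (_ + _); apply: eq_bigr => i _.
  by rewrite (unsplitK (inl i)).
by rewrite (unsplitK (inr i)).
Qed.
End FgSec.


Lemma delta_ent (R : nzRingType) n (k l : 'I_n) : (delta_mx 0 k : 'rV[R]_n) 0 l = (l == k)%:R.
Proof. by rewrite mxE eqxx. Qed.

Lemma sum_setT (R : zmodType) n (F : 'I_n -> R) : \sum_(j in [set: 'I_n]) F j = \sum_j F j.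
Proof. by apply: eq_bigl => j; rewrite inE. Qed.

Section Syz.
Variables (K : numFieldType) (A : algType K).
Hypothesis dom : is_domain A.
Hypothesis noeth : noetherian A.

Lemma lore_A (a b : A) : b != 0 -> exists al be, al != 0 /\ al * a = be * b.
Proof. exact: (@left_ore A dom noeth.1). Qed.

Lemma rore_A (x p : A) : p != 0 -> exists s ga, s != 0 /\ p * ga = x * s.
Proof.
move=> p0.
have domc : forall a b : A^c, a * b = 0 -> a = 0 \/ b = 0.
  by move=> a b h; case: (@dom b a h) => e; [right|left]; exact: e.
have [al [be [al0 e]]] := @left_ore A^c domc noeth.2 x p p0.
by exists al, be; split.
Qed.

Lemma syz k1 k2 (P : 'M[A]_(k1, k2)) : coker_torsion_free P ->
  exists k3 (P2 : 'M[A]_(k2, k3)), P *m P2 = 0 /\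
    forall w : 'rV[A]_k2, w *m P2 = 0 -> exists z, w = z *m P.
Proof.
move=> tf.
pose S (c : 'I_k2 -> A) := forall i, \sum_j P i j * c j = 0.
have Scl : rclosed S.
  split.
  - by move=> i; rewrite big1 // => j _; rewrite mulr0.
  - by move=> u v hu hv i; under eq_bigr do rewrite mulrDr; rewrite big_split /= hu hv addr0.
  - move=> u a hu i; under eq_bigr do rewrite mulrA.
    by rewrite -mulr_suml hu mul0r.
have [k3 [gens [Hg1 Hg2]]] := @fg A noeth.2 k2 S Scl.
exists k3, (\matrix_(j, l) gens l j); split.
  by apply/matrixP => i l; rewrite !mxE; under eq_bigr do rewrite mxE; exact: Hg1.
move=> w hw.
have Hd : forall c : 'I_k2 -> A, (forall i, \sum_(j in [set: 'I_k2]) P i j * c j = 0) ->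
    \sum_(j in [set: 'I_k2]) w 0 j * c j = 0.
  move=> c Hc.
  have Sc : S c by move=> i; rewrite -sum_setT; exact: Hc.
  have [b hb] := Hg2 c Sc.
  rewrite sum_setT.
  under eq_bigr do rewrite hb mulr_sumr.
  rewrite exchange_big /= big1 // => l _.
  under eq_bigr do rewrite mulrA.
  have hwl : \sum_j w 0 j * gens l j = 0.
    have := congr1 (fun m : 'M[A]_(1, k3) => m 0 l) hw; rewrite !mxE => h; rewrite -[RHS]h.
    by apply: eq_bigr => j _; rewrite mxE.
  by rewrite -mulr_suml hwl mul0r.
have [a [v [a0 Hv]]] := @dann A dom lore_A rore_A k1 k2 [set: 'I_k2] (fun i j => P i j) (fun j => w 0 j) Hd.
apply: (tf a) => //; exists (\row_i v i).
apply/rowP => j; rewrite !mxE Hv ?inE //.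
by apply: eq_bigr => i _; rewrite mxE.
Qed.
End Syz.

Section Setting.
Variables (K : numFieldType) (A : algType K) (E : lmodType K) (E' : lmodType A)
  (pr : E -> E' -> K) (ract : E -> A -> E).
Hypothesis bil1 : forall (c : K) x x2 y, pr (c *: x + x2) y = c * pr x y + pr x2 y.
Hypothesis bil2 : forall (c : K) x y y2, pr x (c%:A *: y + y2) = c * pr x y + pr x y2.
Hypothesis nd1 : forall x, (forall y, pr x y = 0) -> x = 0.
Hypothesis nd2 : forall y, (forall x, pr x y = 0) -> y = 0.
Hypothesis hract : forall x a y, pr (ract x a) y = pr x (a *: y).

Lemma prD1 x x2 y : pr (x + x2) y = pr x y + pr x2 y.
Proof. by have := bil1 1 x x2 y; rewrite scale1r mul1r. Qed.
Lemma pr0l y : pr 0 y = 0.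
Proof. by apply: (addrI (pr 0 y)); rewrite -prD1 !addr0. Qed.
Lemma prZ1 c x y : pr (c *: x) y = c * pr x y.
Proof. by have := bil1 c x 0 y; rewrite addr0 pr0l addr0. Qed.
Lemma prN1 x y : pr (- x) y = - pr x y.
Proof. by rewrite -scaleN1r prZ1 mulN1r. Qed.
Lemma prB1 x x2 y : pr (x - x2) y = pr x y - pr x2 y.
Proof. by rewrite prD1 prN1. Qed.
Lemma pr_sum1 n (F : 'I_n -> E) y : pr (\sum_i F i) y = \sum_i pr (F i) y.
Proof. by elim/big_rec2: _ => [|i a b _ <-]; rewrite ?pr0l // prD1. Qed.

Lemma one_alg : (1 : K)%:A = 1 :> A.
Proof. by rewrite scale1r. Qed.
Lemma prD2 x y y2 : pr x (y + y2) = pr x y + pr x y2.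
Proof. by have := bil2 1 x y y2; rewrite one_alg scale1r mul1r. Qed.
Lemma pr0r x : pr x 0 = 0.
Proof. by apply: (addrI (pr x 0)); rewrite -prD2 !addr0. Qed.
Lemma prZ2 c x y : pr x (c%:A *: y) = c * pr x y.
Proof. by have := bil2 c x y 0; rewrite addr0 pr0r addr0. Qed.
Lemma prN2 x y : pr x (- y) = - pr x y.
Proof. by apply: (addrI (pr x y)); rewrite -prD2 !subrr pr0r. Qed.
Lemma prB2 x y y2 : pr x (y - y2) = pr x y - pr x y2.
Proof. by rewrite prD2 prN2. Qed.
Lemma pr_sum2 n x (F : 'I_n -> E') : pr x (\sum_i F i) = \sum_i pr x (F i).
Proof. by elim/big_rec2: _ => [|i a b _ <-]; rewrite ?pr0r // prD2. Qed.

Lemma eq1 x x' : (forall y, pr x y = pr x' y) -> x = x'.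
Proof. by move=> h; apply/eqP; rewrite -subr_eq0; apply/eqP/nd1 => y; rewrite prB1 h subrr. Qed.
Lemma eq2 y y' : (forall x, pr x y = pr x y') -> y = y'.
Proof. by move=> h; apply/eqP; rewrite -subr_eq0; apply/eqP/nd2 => x; rewrite prB2 h subrr. Qed.

Lemma ractD1 x x' a : ract (x + x') a = ract x a + ract x' a.
Proof. by apply: eq1 => y; rewrite hract !prD1 !hract. Qed.
Lemma ractZ1 (c : K) x a : ract (c *: x) a = c *: ract x a.
Proof. by apply: eq1 => y; rewrite hract !prZ1 hract. Qed.
Lemma ract0l a : ract 0 a = 0.
Proof. by apply: eq1 => y; rewrite hract !pr0l. Qed.
Lemma ractB1 x x' a : ract (x - x') a = ract x a - ract x' a.
Proof. by apply: eq1 => y; rewrite hract !prB1 !hract. Qed.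
Lemma ractD2 x a b : ract x (a + b) = ract x a + ract x b.
Proof. by apply: eq1 => y; rewrite hract prD1 !hract scalerDl prD2. Qed.
Lemma ract0r x : ract x 0 = 0.
Proof. by apply: eq1 => y; rewrite hract scale0r pr0r pr0l. Qed.
Lemma ractB2 x a b : ract x (a - b) = ract x a - ract x b.
Proof. by apply: eq1 => y; rewrite hract prB1 !hract scalerBl prB2. Qed.
Lemma ractM x a b : ract (ract x a) b = ract x (a * b).
Proof. by apply: eq1 => y; rewrite !hract scalerA. Qed.
Lemma ract1 x : ract x 1 = x.
Proof. by apply: eq1 => y; rewrite hract scale1r. Qed.
Lemma ract_sum2 n x (F : 'I_n -> A) : ract x (\sum_i F i) = \sum_i ract x (F i).
Proof. by elim/big_rec2: _ => [|i a b _ <-]; rewrite ?ract0r // ractD2. Qed.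
Lemma ract_sum1 n (F : 'I_n -> E) a : ract (\sum_i F i) a = \sum_i ract (F i) a.
Proof. by elim/big_rec2: _ => [|i u v _ <-]; rewrite ?ract0l // ractD1. Qed.

Lemma adjP k1 k2 (P : 'M[A]_(k1, k2)) (z : 'I_k1 -> E) (y : 'I_k2 -> E') :
  pairv pr (rmulv ract P z) y = pairv pr z (lmulv P y).
Proof.
rewrite /pairv /rmulv /lmulv.
under eq_bigr do rewrite pr_sum1.
rewrite exchange_big /=; apply: eq_bigr => i _.
by rewrite pr_sum2; apply: eq_bigr => j _; rewrite hract.
Qed.


Lemma rmulv_vec k1 k2 (P : 'M[A]_(k1, k2)) x0 (v : 'rV[A]_k1) :
  rmulv ract P (fun i => ract x0 (v 0 i)) = fun j => ract x0 ((v *m P) 0 j).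
Proof.
apply: funext => j; rewrite /rmulv mxE ract_sum2; apply: eq_bigr => i _.
by rewrite ractM.
Qed.

Section Part1.
Variables (k1 k2 : nat) (P : 'M[A]_(k1, k2)) (x : 'I_k1 -> E').
Hypothesis Hx : forall p q, rmulv ract P p = rmulv ract P q -> pairv pr p x = pairv pr q x.
Definition Sx (v : 'rV[A]_k1) : E' := \sum_i v 0 i *: x i.
Lemma Sx_wd v v' : v *m P = v' *m P -> Sx v = Sx v'.
Proof.
move=> e; apply: eq2 => x0.
have key : forall w, pr x0 (Sx w) = pairv pr (fun i => ract x0 (w 0 i)) x.
  by move=> w; rewrite /Sx pr_sum2 /pairv; apply: eq_bigr => i _; rewrite hract.
rewrite !key; apply: Hx; by rewrite !rmulv_vec e.
Qed.
Lemma Sx_lin a v v' : Sx (a *: v + v') = a *: Sx v + Sx v'.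
Proof.
rewrite /Sx scaler_sumr -big_split /=; apply: eq_bigr => i _.
by rewrite !mxE scalerDl scalerA.
Qed.
Definition pickv (m : imSub P) : 'rV[A]_k1 := projT1 (cid (imvalP m)).
Lemma pickvP m : imval m = pickv m *m P.
Proof. by rewrite /pickv; case: (cid _). Qed.
Definition fM (m : imSub P) : E' := Sx (pickv m).
Lemma fM_lin : linear fM.
Proof.
move=> a m m'; rewrite /fM -Sx_lin; apply: Sx_wd.
by rewrite -pickvP mulmxDl -scalemxAl -!pickvP.
Qed.
Lemma char1_core (inj : injective_module E') : exists y, lmulv P y = x.
Proof.
have [g Hg] := inj _ _ (@imval _ _ _ P : {linear imSub P -> 'rV[A]_k2}) (HB.pack fM (GRing.isLinear.Build A (imSub P) E' _ fM fM_lin)) (@imval_inj _ _ _ P).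
exists (fun j => g (delta_mx 0 j)); apply: funext => i.
rewrite /lmulv.
have -> : \sum_(j < k2) P i j *: g (delta_mx 0 j) = g (delta_mx 0 i *m P).
  rewrite (eq_bigr (fun j => g (P i j *: delta_mx 0 j))); last by move=> j _; rewrite linearZ.
  rewrite -linear_sum; congr (g _); apply/rowP => l.
  rewrite summxE mxE; transitivity (P i l).
    rewrite (bigD1 l) //= mxE delta_ent eqxx mulr1 big1 ?addr0 // => k /negbTE nk.
    by rewrite mxE delta_ent eq_sym nk mulr0.
  rewrite (bigD1 i) //= delta_ent eqxx mul1r big1 ?addr0 // => k /negbTE nk.
  by rewrite delta_ent nk mul0r.
have -> : delta_mx 0 i *m P = imval (mkIm P (delta_mx 0 i)) by [].
rewrite Hg /= /fM (Sx_wd (v' := delta_mx 0 i)); last by rewrite -pickvP.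
rewrite /Sx (bigD1 i) //= delta_ent eqxx scale1r big1 ?addr0 // => j /negbTE nj.
by rewrite delta_ent nj scale0r.
Qed.
End Part1.

Lemma rmulv_mv k1 k2 (P : 'M[A]_(k1, k2)) (t : K) (z p q : 'I_k1 -> E) :
  rmulv ract P p = rmulv ract P q ->
  rmulv ract P (fun i => z i + t *: (p i - q i)) = rmulv ract P z.
Proof.
move=> e; apply: funext => j; have ej := congr1 (fun f => f j) e; move: ej.
rewrite /rmulv => ej.
rewrite (eq_bigr (fun i => ract (z i) (P i j) + t *: (ract (p i) (P i j) - ract (q i) (P i j)))); last first.
  by move=> i _; rewrite ractD1 ractZ1 ractB1.
by rewrite big_split /= -scaler_sumr sumrB ej subrr scaler0 addr0.
Qed.

Lemma part1 (inj : injective_module E') k1 k2 (P : 'M[A]_(k1, k2)) :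
  wclosed (pairv pr (k:=k1)) (fun y => exists z, lmulv P z = y) /\
  strict_morphism (tpair (pairv pr (k:=k1))) (tpair (pairv pr (k:=k2))) (rmulv ract P).
Proof.
have adj : forall y z, tpair (pairv pr (k:=k2)) y (rmulv ract P z) =
    tpair (pairv pr (k:=k1)) (lmulv P y) z by move=> y z; rewrite /tpair adjP.
pose mv (t : K) (z p q : 'I_k1 -> E) := fun i => z i + t *: (p i - q i).
have mvf : forall t z p q, rmulv ract P p = rmulv ract P q -> rmulv ract P (mv t z p q) = rmulv ract P z.
  by move=> t z p q; apply: rmulv_mv.
have mvb : forall t z p q x, tpair (pairv pr (k:=k1)) x (mv t z p q) =
   tpair (pairv pr (k:=k1)) x z + t * (tpair (pairv pr (k:=k1)) x p - tpair (pairv pr (k:=k1)) x q).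
  move=> t z p q x; rewrite /tpair /pairv /mv -sumrB mulr_sumr -big_split /=.
  by apply: eq_bigr => i _; rewrite prD1 prZ1 prB1.
pose cb (c : K) (x x2 : 'I_k1 -> E') := fun i => x i - c%:A *: x2 i.
have cbb : forall c x x2 z, tpair (pairv pr (k:=k1)) (cb c x x2) z =
   tpair (pairv pr (k:=k1)) x z - c * tpair (pairv pr (k:=k1)) x2 z.
  move=> c x x2 z; rewrite /tpair /pairv /cb mulr_sumr -sumrB.
  by apply: eq_bigr => i _; rewrite prB2 prZ2.
have ch : forall x, (forall p q, rmulv ract P p = rmulv ract P q ->
    tpair (pairv pr (k:=k1)) x p = tpair (pairv pr (k:=k1)) x q) -> exists y, lmulv P y = x.
  by move=> x Hx; apply: char1_core.
split; [exact: (gen_closed adj ch) | exact: (gen_strict adj mvf mvb cbb ch)].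
Qed.

Section Part2.
Variables (k1 k2 k3 : nat) (P : 'M[A]_(k1, k2)) (P2 : 'M[A]_(k2, k3)).
Hypothesis hPP : P *m P2 = 0.
Hypothesis hker : forall w : 'rV[A]_k2, w *m P2 = 0 -> exists z, w = z *m P.

Definition SEp (w : {ffun 'I_k2 -> E}) : Prop :=
  exists z : 'I_k1 -> E, rmulv ract P z = (fun j => w j).
Lemma SE0 : SEp 0.
Proof.
exists (fun _ => 0); apply: funext => j.
by rewrite /rmulv ffunE big1 // => i _; rewrite ract0l.
Qed.
Lemma SEB a b : SEp a -> SEp b -> SEp (a - b).
Proof.
move=> [z hz] [z' hz']; exists (fun i => z i - z' i); apply: funext => j.
have ea : a j = rmulv ract P z j by rewrite hz.
have eb : b j = rmulv ract P z' j by rewrite hz'.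
rewrite !ffunE ea eb /rmulv -sumrB; apply: eq_bigr => i _; by rewrite ractB1.
Qed.
Definition SE := @ZPred _ SEp SE0 SEB.

Definition vecE (e : E) (v : 'rV[A]_k2) : {ffun 'I_k2 -> E} := [ffun j => ract e (v 0 j)].
Lemma vecE_im e z : SEp (vecE e (z *m P)).
Proof.
exists (fun i => ract e (z 0 i)); rewrite rmulv_vec; apply: funext => j.
by rewrite ffunE.
Qed.
Lemma vecE_B e v v' : vecE e v - vecE e v' = vecE e (v - v').
Proof. by apply/ffunP => j; rewrite !ffunE !mxE ractB2. Qed.
Lemma vecE_wd e v v' : v *m P2 = v' *m P2 -> qpi SE (vecE e v) = qpi SE (vecE e v').
Proof.
move=> h; apply/qpi_eq; rewrite vecE_B.
have [z hz] : exists z, v - v' = z *m P by apply: hker; rewrite mulmxBl h subrr.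
by rewrite hz; apply: vecE_im.
Qed.

Definition pick2 (m : imSub P2) : 'rV[A]_k2 := projT1 (cid (imvalP m)).
Lemma pick2P m : imval m = pick2 m *m P2.
Proof. by rewrite /pick2; case: (cid _). Qed.
Definition beta (e : E) (m : imSub P2) : quo SE := qpi SE (vecE e (pick2 m)).
Lemma beta_bal : balanced ract beta.
Proof.
split.
- move=> x x' m; rewrite /beta -qpiD; congr qpi.
  by apply/ffunP => j; rewrite !ffunE ractD1.
- move=> x m m'; rewrite /beta -qpiD.
  have -> : vecE x (pick2 m) + vecE x (pick2 m') = vecE x (pick2 m + pick2 m').
    by apply/ffunP => j; rewrite !ffunE !mxE ractD2.
  by apply: vecE_wd; rewrite mulmxDl -!pick2P.
- move=> x a m; rewrite /beta.
  have -> : vecE (ract x a) (pick2 m) = vecE x (a *: pick2 m).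
    by apply/ffunP => j; rewrite !ffunE !mxE ractM.
  by apply: vecE_wd; rewrite -scalemxAl -!pick2P.
Qed.

Lemma char2_core (fl : flat_module ract) (x : 'I_k2 -> E) :
  (forall l, \sum_j ract (x j) (P2 j l) = 0) -> exists z, rmulv ract P z = x.
Proof.
move=> hx.
have HN : tensor_zero ract x (fun k => imval (mkIm P2 (delta_mx 0 k))).
  move=> G bt [bD1 bD2 bZ].
  have b0 : forall e, bt e 0 = 0.
    by move=> e; apply: (addrI (bt e 0)); rewrite -bD2 !addr0.
  have b0' : forall m, bt 0 m = 0.
    by move=> m; apply: (addrI (bt 0 m)); rewrite -bD1 !addr0.
  have bsum2 : forall e n (F : 'I_n -> 'rV[A]_k3), bt e (\sum_i F i) = \sum_i bt e (F i).
    by move=> e n F; elim/big_rec2: _ => [|i a b _ <-]; rewrite ?b0 // bD2.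
  have bsum1 : forall m n (F : 'I_n -> E), bt (\sum_i F i) m = \sum_i bt (F i) m.
    by move=> m n F; elim/big_rec2: _ => [|i a b _ <-]; rewrite ?b0' // bD1.
  have dec : forall k, (delta_mx 0 k : 'rV[A]_k2) *m P2 = \sum_l P2 k l *: (delta_mx 0 l : 'rV[A]_k3).
    move=> k; apply/rowP => l; rewrite summxE mxE.
    rewrite (bigD1 k) //= delta_ent eqxx mul1r big1 ?addr0; last first.
      by move=> i /negbTE ni; rewrite delta_ent ni mul0r.
    rewrite (bigD1 l) //= mxE delta_ent eqxx mulr1 big1 ?addr0 // => i /negbTE ni.
    by rewrite mxE delta_ent eq_sym ni mulr0.
  rewrite /=.
  under eq_bigr do rewrite dec bsum2.
  under eq_bigr do under eq_bigr do rewrite -bZ.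
  rewrite exchange_big /= big1 // => l _.
  by rewrite -bsum1 hx b0'.
have := fl (imSub P2) 'rV[A]_k3 (@imval _ _ _ P2 : {linear imSub P2 -> 'rV[A]_k3})
  (@imval_inj _ _ _ P2) k2 x (fun k => mkIm P2 (delta_mx 0 k)) HN (quo SE) beta beta_bal.
have -> : \sum_k beta (x k) (mkIm P2 (delta_mx 0 k)) = qpi SE [ffun j => x j].
  rewrite (eq_bigr (fun k => qpi SE (vecE (x k) (delta_mx 0 k)))); last first.
    by move=> k _; rewrite /beta; apply: vecE_wd; rewrite -pick2P.
  rewrite -qpi_sum; congr qpi; apply/ffunP => j; rewrite sum_ffunE ffunE.
  rewrite (bigD1 j) //= ffunE delta_ent eqxx ract1 big1 ?addr0 // => k /negbTE nk.
  by rewrite ffunE delta_ent eq_sym nk ract0r.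
move/qpi_eq0 => [z hz]; exists z; rewrite hz; apply: funext => j; by rewrite ffunE.
Qed.

Lemma char2 (fl : flat_module ract) (x : 'I_k2 -> E) :
  (forall p q, lmulv P p = lmulv P q -> pairv pr x p = pairv pr x q) ->
  exists z, rmulv ract P z = x.
Proof.
move=> Hx; apply: char2_core => // l; apply: nd1 => y.
rewrite pr_sum1.
have := Hx (fun j => P2 j l *: y) (fun _ => 0).
rewrite /pairv.
have e1 : forall j, pr (ract (x j) (P2 j l)) y = pr (x j) (P2 j l *: y) by move=> j; rewrite hract.
rewrite (eq_bigr _ (fun j _ => e1 j)) => ->.
  by rewrite big1 // => j _; rewrite pr0r.
apply: funext => i; rewrite /lmulv [RHS]big1; last by move=> j _; rewrite scaler0.
rewrite (eq_bigr (fun j => (P i j * P2 j l) *: y)); last by move=> j _; rewrite scalerA.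
rewrite -scaler_suml.
have := congr1 (fun m : 'M[A]_(k1, k3) => m i l) hPP; rewrite !mxE => ->.
by rewrite scale0r.
Qed.
End Part2.

Lemma part2 (dom : is_domain A) (noeth : noetherian A) k1 k2 (P : 'M[A]_(k1, k2)) :
  coker_torsion_free P -> flat_module ract ->
  wclosed (tpair (pairv pr (k:=k2))) (fun x => exists z, rmulv ract P z = x) /\
  strict_morphism (pairv pr (k:=k2)) (pairv pr (k:=k1)) (lmulv P).
Proof.
move=> tf fl.
have [k3 [P2 [hPP hker]]] := syz dom noeth tf.
have adj : forall y z, pairv pr (k:=k1) y (lmulv P z) = pairv pr (k:=k2) (rmulv ract P y) z.
  by move=> y z; rewrite adjP.
pose mv (t : K) (z p q : 'I_k2 -> E') := fun i => z i + t%:A *: (p i - q i).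
have mvf : forall t z p q, lmulv P p = lmulv P q -> lmulv P (mv t z p q) = lmulv P z.
  move=> t z p q e; apply: funext => i; have ei := congr1 (fun f => f i) e; move: ei.
  rewrite /lmulv /mv /= => ei.
  rewrite (eq_bigr (fun j => P i j *: z j + t%:A *: (P i j *: p j - P i j *: q j))); last first.
    by move=> j _; rewrite scalerDr -scalerBr !scalerA mulr_algl mulr_algr.
  by rewrite big_split /= -scaler_sumr sumrB ei subrr scaler0 addr0.
have mvb : forall t z p q x, pairv pr (k:=k2) x (mv t z p q) =
   pairv pr (k:=k2) x z + t * (pairv pr (k:=k2) x p - pairv pr (k:=k2) x q).
  move=> t z p q x; rewrite /pairv /mv -sumrB mulr_sumr -big_split /=.
  by apply: eq_bigr => i _; rewrite prD2 prZ2 prB2.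
pose cb (c : K) (x x2 : 'I_k2 -> E) := fun i => x i - c *: x2 i.
have cbb : forall c x x2 z, pairv pr (k:=k2) (cb c x x2) z =
   pairv pr (k:=k2) x z - c * pairv pr (k:=k2) x2 z.
  move=> c x x2 z; rewrite /pairv /cb mulr_sumr -sumrB.
  by apply: eq_bigr => i _; rewrite prB1 prZ1.
have ch : forall x, (forall p q, lmulv P p = lmulv P q ->
    pairv pr (k:=k2) x p = pairv pr (k:=k2) x q) -> exists y, rmulv ract P y = x.
  by move=> x Hx; apply: (char2 hPP hker fl).
split; [exact: (gen_closed adj ch) | exact: (gen_strict adj mvf mvb cbb ch)].
Qed.

End Setting.

Unset Implicit Arguments.

Theorem lemma4 (K : numFieldType) (A : algType K)
  (E : lmodType K) (E' : lmodType A) (pr : E -> E' -> K)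
  (ract : E -> A -> E) (k1 k2 : nat) (P1 : 'M[A]_(k1, k2)) :
  (* A is a Noetherian domain *)
  is_domain A -> noetherian A ->
  (* <-,-> is K-bilinear (K acts on E' through K -> A) *)
  (forall (c : K) x x2 y, pr (c *: x + x2) y = c * pr x y + pr x2 y) ->
  (forall (c : K) x y y2, pr x (c%:A *: y + y2) = c * pr x y + pr x y2) ->
  (* nondegenerate *)
  (forall x, (forall y, pr x y = 0) -> x = 0) ->
  (forall y, (forall x, pr x y = 0) -> y = 0) ->
  (* E' is semitopological for sigma(E', E) *)
  (forall a : A, wcontinuous pr pr (fun y : E' => a *: y)) ->
  (* right A-module structure of E: <x a, x'> = <x, a x'> *)
  (forall x a y, pr (ract x a) y = pr x (a *: y)) ->
  (* (i) *)
  (injective_module E' ->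
     wclosed (pairv pr (k:=k1)) (fun y => exists z, lmulv P1 z = y) /\
     strict_morphism (tpair (pairv pr (k:=k1))) (tpair (pairv pr (k:=k2)))
       (rmulv ract P1)) /\
  (* (ii) *)
  (coker_torsion_free P1 -> flat_module ract ->
     wclosed (tpair (pairv pr (k:=k2))) (fun x => exists z, rmulv ract P1 z = x) /\
     strict_morphism (pairv pr (k:=k2)) (pairv pr (k:=k1)) (lmulv P1)).
Proof.
move=> dom noeth bil1 bil2 nd1 nd2 semi hract; split.
  by move=> inj; apply: part1.
by move=> tf fl; apply: part2.
Qed.
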